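(* For every $n\geq 1$, $$\sum_{T\in \mathcal P_n}t^{\mathrm{eld}(T)}\prod_{i=1}^{n}x_i^{\mathrm{young}_T(i)}=\prod_{k=0}^{n-2}(x_1+\cdots+x_n+kt).$$
   Context: All trees are rooted trees whose vertices are labeled by distinct positive integers. A vertex $j$ is a descendant of $i$ if the path from the root to $j$ passes through $i$ (every vertex is a descendant of itself); $\beta_T(i)$ is the smallest descendant of $i$. A child of $i$ is a descendant joined to $i$ by an edge; children of the same vertex are brothers. A plane tree is a rooted tree in which the children of each vertex are linearly ordered (left to right). In a plane tree $T$, a vertex $j$ is elder if it has a brother $k$ to its right with $\beta_T(k)<\beta_T(j)$. $\mathrm{eld}_T(v)$ is the number of elder children of $v$, $\mathrm{eld}(T)$ the total number of elder vertices, $\deg_T(v)$ the number of children of $v$, and $\mathrm{young}_T(v)=\deg_T(v)-\mathrm{eld}_T(v)$. $\mathcal P_n$ is the set of all plane trees on vertex set $[n]=\{1,\dots,n\}$ (any root). The empty product equals $1$. *)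

(* Defs.v *)
From mathcomp Require Import all_boot all_order all_algebra.
Set Implicit Arguments. Unset Strict Implicit. Unset Printing Implicit Defensive.
Import GRing.Theory.

(* Encoding of a plane tree on the vertex set {0,...,n-1} (vertex i stands for
   the paper's label i+1; the shift preserves the order of labels):
   - par : parent function; the root r is the unique vertex with par r = r;
   - pos : position of a vertex among its brothers (0 = leftmost);
           the root has position 0 (normalisation).
   Every plane tree on [n] corresponds to exactly one valid pair (par,pos). *)
Notation ptree n := ({ffun 'I_n -> 'I_n} * {ffun 'I_n -> 'I_n})%type.

Section PlaneTree.
Variable n : nat.
Implicit Types (T : ptree n) (i j k v : 'I_n).

Definition par T := T.1.
Definition pos T := T.2.

Definition is_rootv T v : bool := par T v == v.

Definition desc T i j : bool := [exists k : 'I_n.+1, iter k (par T) j == i].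

Definition child T i j : bool := (par T j == i) && (j != i).

Definition deg T v : nat := #|[pred j | child T v j]|.

Definition is_plane_tree T : bool :=
  [&& #|[pred v | is_rootv T v]| == 1,
      [forall j, exists k : 'I_n.+1, is_rootv T (iter k (par T) j)],
      [forall v, is_rootv T v ==> (pos T v == 0 :> nat)],
      [forall i, forall j, child T i j ==> (pos T j < deg T i)] &
      [forall i, forall j, forall k,
         [&& child T i j, child T i k & pos T j == pos T k] ==> (j == k)]].

Definition beta T i : nat := \big[minn/n]_(j | desc T i j) (val j).

Definition elder T j : bool :=
  [exists k, [&& child T (par T j) j, child T (par T j) k,
                 pos T j < pos T k & beta T k < beta T j]].

Definition eldv T v : nat := #|[pred j | child T v j && elder T j]|.
Definition eld T : nat := #|[pred j | elder T j]|.
Definition young T v : nat := deg T v - eldv T v.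

End PlaneTree.

(* Main.v *)
Require Import Defs.
From mathcomp Require Import all_boot all_order all_algebra.
From mathcomp Require Import zify ring.
From mathcomp Require Import mpoly.
Set Implicit Arguments. Unset Strict Implicit. Unset Printing Implicit Defensive.
Import GRing.Theory.

Section Forest.
Variable n : nat.
Implicit Types (F : {ffun 'I_n -> 'I_n}) (u v c p j : 'I_n).

Definition rootb F v : bool := F v == v.
Definition acyc F : bool := [forall j, exists k : 'I_n.+1, rootb F (iter k F j)].
Definition nr F : nat := #|[pred v | ~~ rootb F v]|.
Definition chld F v j : bool := (F j == v) && (j != v).
Definition dg F v : nat := #|[pred j | chld F v j]|.
Definition rt F v := iter n F v.
Definition upd F c p : {ffun 'I_n -> 'I_n} := [ffun v => if v == c then p else F v].

Lemma iter_root F v k : rootb F v -> iter k F v = v.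
Proof. by move=> /eqP Hv; elim: k => //= k ->. Qed.

Lemma reach_bound F j k : rootb F (iter k F j) -> rootb F (iter n F j).
Proof.
elim/ltn_ind: k => k IH Hk.
case: (leqP k n) => [kn|nk].
  have -> : iter n F j = iter (n - k) F (iter k F j) by rewrite -iterD subnK.
  by rewrite iter_root.
pose f := fun i : 'I_n.+1 => iter i F j.
have ninj : ~~ injectiveb f.
  apply/negP=> /injectiveP inj; have := leq_card _ inj.
  by rewrite !card_ord ltnn.
have [a [b [ab fab]]] : exists a b, a != b /\ f a = f b.
  case/boolP: [exists a, exists b, (a != b) && (f a == f b)].
    by move=> /existsP[a /existsP[b /andP[ab /eqP fab]]]; exists a, b.
  move=> /negP Hn; exfalso; move/negP: ninj; apply; apply/injectiveP => a b fab.
  apply/eqP/negPn/negP => ab; apply: Hn.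
  by apply/existsP; exists a; apply/existsP; exists b; rewrite ab fab eqxx.
  wlog ltab : a b ab fab / a < b.
    move=> W; case: (ltngtP a b) => h; first exact: (W a b).
    - by apply: (W b a); rewrite // eq_sym.
    - by move: ab; rewrite (val_inj h) eqxx.
  have per m : a <= m -> iter (m + (b - a)) F j = iter m F j.
    move=> am; rewrite -(subnK am) -addnA (addnC a) subnK ?(ltnW ltab) //.
    by rewrite iterD; rewrite /f in fab; rewrite -fab -iterD subnK.
  have bn : (b <= n)%N by rewrite -ltnS ltn_ord.
  have ka : a <= k - (b - a) by lia.
  apply: (IH (k - (b - a))); first by lia.
  by rewrite -(per _ ka) subnK //; lia.
Qed.

Lemma acycP F : reflect (forall j, exists k, rootb F (iter k F j)) (acyc F).
Proof.
apply: (iffP forallP) => H j.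
  by have /existsP[k Hk] := H j; exists k.
have [k Hk] := H j; apply/existsP; exists ord_max; exact: reach_bound Hk.
Qed.

Lemma acyc_rt F v : acyc F -> rootb F (rt F v).
Proof. by move=> /acycP /(_ v) [k]; apply: reach_bound. Qed.

Lemma rt_root F v : rootb F v -> rt F v = v.
Proof. exact: iter_root. Qed.

Lemma iter_mul F L v m : iter L F v = v -> iter (L * m) F v = v.
Proof. by move=> H; elim: m => [|m IH]; rewrite ?muln0 // mulnS iterD IH. Qed.

Lemma cycle_root F L v : acyc F -> 0 < L -> iter L F v = v -> rootb F v.
Proof.
move=> ac L0 H; have R := acyc_rt v ac.
have: iter (L * n) F v = v by apply: iter_mul.
have nLn : n <= L * n by rewrite leq_pmull.
have -> : iter (L * n) F v = iter (L * n - n) F (rt F v) by rewrite -iterD subnK.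
by rewrite iter_root // => <-.
Qed.

Lemma iter_agree F1 F2 c v k :
  (forall u, u != c -> F1 u = F2 u) ->
  (forall i, i < k -> iter i F2 v != c) -> iter k F1 v = iter k F2 v.
Proof.
move=> Hag; elim: k => [//|k IH] Hi.
rewrite !iterS IH; last by move=> i ik; apply: Hi; apply: ltn_trans ik _.
by apply: Hag; apply: Hi.
Qed.

Lemma rt_hit F v i : rootb F (rt F v) -> iter i F v = v -> True.
Proof. by []. Qed.

Lemma never_hit F c v : acyc F -> rootb F c -> rt F v != c ->
  forall i, iter i F v != c.
Proof.
move=> ac rc nv i; apply/eqP=> Hi; move/eqP: nv; apply.
case: (leqP i n) => [iln|nli].
  have -> : rt F v = iter (n - i) F (iter i F v) by rewrite -iterD subnK.
  by rewrite Hi iter_root.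
have R := acyc_rt v ac; move: Hi.
have -> : iter i F v = iter (i - n) F (rt F v) by rewrite -iterD subnK // ltnW.
by rewrite iter_root.
Qed.

Lemma updE F c p u : upd F c p u = if u == c then p else F u.
Proof. by rewrite ffunE. Qed.

Lemma upd_agree F c p u : u != c -> upd F c p u = F u.
Proof. by rewrite updE => /negPf ->. Qed.

Lemma fwd_root F c p w : acyc F -> rootb F c -> rt F w != c ->
  rootb (upd F c p) (iter n (upd F c p) w).
Proof.
move=> ac rc nw; have NH := never_hit ac rc nw.
have ag : forall u, u != c -> upd F c p u = F u by move=> u; apply: upd_agree.
rewrite (iter_agree ag); last by move=> i _; apply: NH.
rewrite /rootb upd_agree; last exact: NH.
exact: (acyc_rt w ac).
Qed.

Lemma fwd F c p : acyc F -> rootb F c -> rt F p != c -> acyc (upd F c p).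
Proof.
move=> ac rc np; apply/acycP => v.
case/boolP: (rt F v == c) => hv; last by exists n; apply: fwd_root.
have ex : exists i, iter i F v == c by exists n.
pose i0 := ex_minn ex.
have [Hi0 Hmin] : iter i0 F v == c /\ forall i, iter i F v == c -> i0 <= i.
  by rewrite /i0; case: ex_minnP.
have Hc : iter i0 (upd F c p) v = c.
  rewrite (@iter_agree _ F c) ?(eqP Hi0) //; first by move=> u; apply: upd_agree.
  by move=> i ii; apply/negP => /Hmin; rewrite leqNgt ii.
exists (n + i0.+1); rewrite iterD iterS Hc updE eqxx.
exact: fwd_root.
Qed.

Lemma bwd F c : acyc F -> ~~ rootb F c ->
  acyc (upd F c c) && (rt (upd F c c) (F c) != c).
Proof.
move=> ac nc; set F0 := upd F c c.
have ag : forall u, u != c -> F0 u = F u by move=> u; apply: upd_agree.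
have ag' : forall u, u != c -> F u = F0 u by move=> u /ag ->.
have rc : rootb F0 c by rewrite /rootb /F0 updE eqxx.
have ac0 : acyc F0.
  apply/acycP => v.
  case/boolP: [exists i : 'I_n.+1, iter i F v == c].
    move=> ex0; have ex : exists i, iter i F v == c.
      by case/existsP: ex0 => i Hi; exists i.
    pose i0 := ex_minn ex.
    have [Hi0 Hmin] : iter i0 F v == c /\ forall i, iter i F v == c -> i0 <= i.
      by rewrite /i0; case: ex_minnP.
    exists i0; rewrite (@iter_agree _ F c) ?(eqP Hi0) //.
    by move=> i ii; apply/negP => /Hmin; rewrite leqNgt ii.
  move=> nex; exists n.
  have nh : forall i, i < n.+1 -> iter i F v != c.
    move=> i ii; apply/negP => Hi; move/negP: nex; apply.
    by apply/existsP; exists (Ordinal ii).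
  rewrite (iter_agree ag); last by move=> i ii; apply: nh; apply: ltnW.
  have R := acyc_rt v ac; rewrite /rootb ag //; exact: nh.
apply/andP; split => //; apply/negP => Hrt.
have ex : exists i, iter i F0 (F c) == c by exists n.
pose i0 := ex_minn ex.
have [Hi0 Hmin] : iter i0 F0 (F c) == c /\ forall i, iter i F0 (F c) == c -> i0 <= i.
  by rewrite /i0; case: ex_minnP.
have : iter i0 F (F c) = c.
  rewrite (@iter_agree _ F0 c) ?(eqP Hi0) //.
  by move=> i ii; apply/negP => /Hmin; rewrite leqNgt ii.
rewrite -iterSr => H; move/negP: nc; apply.
exact: (cycle_root ac _ H).
Qed.


Lemma rootb_upd F c p u : rootb (upd F c p) u = if u == c then p == c else rootb F u.
Proof. by rewrite /rootb updE; case: (u =P c) => // ->. Qed.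

Lemma nr_upd F c p : rootb F c -> p != c -> nr (upd F c p) = (nr F).+1.
Proof.
move=> rc pc; rewrite /nr (cardD1 c) (cardD1 c [pred v | ~~ rootb F v]) !inE.
rewrite rootb_upd eqxx (negPf pc) rc /= add0n add1n; congr _.+1.
by apply: eq_card => u; rewrite !inE rootb_upd; case: eqP.
Qed.

Lemma chld_upd F c p u j :
  chld (upd F c p) u j = if j == c then (p == u) && (c != u) else chld F u j.
Proof. by rewrite /chld updE; case: (j =P c) => // ->. Qed.

Lemma dg_upd F c p u : rootb F c -> p != c -> dg (upd F c p) u = dg F u + (p == u).
Proof.
move=> rc pc; rewrite /dg (cardD1 c) (cardD1 c [pred j | chld F u j]) !inE.
rewrite chld_upd eqxx.
have -> : chld F u c = false by rewrite /chld (eqP rc); case: (c =P u).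
rewrite add0n addnC; congr (_ + _).
  apply: eq_card => j; rewrite !inE chld_upd; case: (j =P c) => //= _.
case: (p =P u) => //= <-; by rewrite eq_sym pc.
Qed.

Lemma sum_dg F : \sum_v dg F v = nr F.
Proof.
rewrite /dg /nr; under eq_bigr do rewrite -sum1_card big_mkcond /=.
rewrite exchange_big /= -[RHS]sum1_card [RHS]big_mkcond /=; apply: eq_bigr => j _.
rewrite (bigD1 (F j)) //= big1 => [|v vF]; last first.
  by rewrite inE /chld eq_sym (negPf vF).
by rewrite addn0 !inE /chld eqxx /rootb eq_sym.
Qed.

Lemma card_roots F : #|[pred v | rootb F v]| + nr F = n.
Proof.
by rewrite -[RHS]card_ord -(cardC [pred v | rootb F v]) /nr.
Qed.

Lemma card_roots_but F v : acyc F ->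
  #|[pred c | rootb F c && (c != rt F v)]| = #|[pred c | rootb F c]| - 1.
Proof.
move=> ac; rewrite [in RHS](cardD1 (rt F v)) !inE acyc_rt // add1n subn1 /=.
by apply: eq_card => c; rewrite !inE andbC.
Qed.

Lemma predeq m c F p :
  acyc (upd F c p) && (nr (upd F c p) == m.+1) && ~~ rootb (upd F c p) c &&
  ((upd (upd F c p) c c, upd F c p c) == (F, p)) =
  acyc F && (nr F == m) && rootb F c && (rt F p != c).
Proof.
have uu : upd (upd F c p) c c = upd F c c.
  by apply/ffunP => u; rewrite !updE; case: (u =P c).
rewrite uu updE eqxx.
have Hpair : ((upd F c c, p) == (F, p)) = rootb F c.
  apply/idP/idP => [/eqP [] /ffunP /(_ c)|rc].
    by rewrite updE eqxx /rootb => <-.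
  apply/eqP; congr (_, _); apply/ffunP => u; rewrite updE; case: (u =P c) => // ->.
  by rewrite (eqP rc).
rewrite Hpair.
case/boolP: (rootb F c) => rc; last by rewrite !andbF.
rewrite !andbT.
apply/idP/idP.
  move=> /andP[/andP[ac nrF] nrc].
  have pc : p != c by move: nrc; rewrite rootb_upd eqxx.
  have := bwd ac nrc; rewrite uu updE eqxx => /andP[].
  have -> : upd F c c = F.
    by apply/ffunP => u; rewrite updE; case: (u =P c) => // ->; rewrite (eqP rc).
  move=> -> ->; rewrite andbT /=.
  by move: nrF; rewrite nr_upd // eqSS.
move=> /andP[/andP[ac nrF] np].
have pc : p != c by apply: contraNneq np => ->; rewrite rt_root.
by rewrite fwd // nr_upd // eqSS nrF rootb_upd eqxx pc.
Qed.

Section Weights.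
Variables (R : comRingType) (x : 'I_n -> R) (t : R).
Local Open Scope ring_scope.

Definition rising (y : R) (d : nat) := \prod_(i < d) (y + i%:R * t).
Definition Phi F := \prod_v rising (x v) (dg F v).
Definition wt F p := x p + (dg F p)%:R * t.
Definition G (m : nat) := \sum_(F | acyc F && (nr F == m)) Phi F.
Definition Ssum := \sum_i x i.

Lemma risingS y d : rising y d.+1 = rising y d * (y + d%:R * t).
Proof. by rewrite /rising big_ord_recr. Qed.

Lemma Phi_upd F c p : rootb F c -> p != c -> Phi (upd F c p) = Phi F * wt F p.
Proof.
move=> rc pc; rewrite /Phi (bigD1 p) // [in RHS](bigD1 p) //= dg_upd // eqxx addn1.
rewrite risingS -!mulrA; congr (_ * _); rewrite mulrC; congr (_ * _).
by apply: eq_bigr => v vp; rewrite dg_upd // eq_sym (negPf vp) addn0.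
Qed.

Lemma sum_wt F : \sum_p wt F p = Ssum + (nr F)%:R * t.
Proof. by rewrite big_split /= -mulr_suml -natr_sum sum_dg. Qed.

Lemma inner_sum F m : acyc F -> nr F = m ->
  \sum_c \sum_p (if rootb F c && (rt F p != c) then wt F p else 0)
  = (n - m.+1)%:R * (Ssum + m%:R * t).
Proof.
move=> ac nrm; rewrite exchange_big /=.
transitivity (\sum_p wt F p * (n - m.+1)%:R).
  apply: eq_bigr => p _; rewrite -big_mkcond /= sumr_const.
  rewrite mulr_natr; congr (_ *+ _).
  rewrite (eq_card (B := [pred c | rootb F c && (c != rt F p)])); last first.
    by move=> c; rewrite !inE eq_sym.
  rewrite card_roots_but //; have := card_roots F; rewrite nrm; lia.
by rewrite -mulr_suml sum_wt nrm mulrC.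
Qed.

Lemma reindex_c m c :
  \sum_(F | acyc F && (nr F == m.+1) && ~~ rootb F c) Phi F =
  \sum_(q : {ffun 'I_n -> 'I_n} * 'I_n | acyc q.1 && (nr q.1 == m) && rootb q.1 c
        && (rt q.1 q.2 != c)) Phi q.1 * wt q.1 q.2.
Proof.
rewrite (reindex_onto (fun q : {ffun 'I_n -> 'I_n} * 'I_n => upd q.1 c q.2)
                      (fun F => (upd F c c, F c))) /=; last first.
  by move=> F _; apply/ffunP => u; rewrite !updE; case: eqP => // ->.
rewrite (eq_bigl (fun q : {ffun 'I_n -> 'I_n} * 'I_n => acyc q.1 && (nr q.1 == m)
   && rootb q.1 c && (rt q.1 q.2 != c))) => [|[F p]]; last first.
  exact: predeq.
apply: eq_bigr => [[F p]] /= /andP[/andP[/andP[_ _] rc] np]; apply: Phi_upd => //.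
by apply: contraNneq np => ->; rewrite rt_root.
Qed.

Lemma G_rec m : (m.+1)%:R * G m.+1 = (n - m.+1)%:R * (Ssum + m%:R * t) * G m.
Proof.
rewrite /G mulr_sumr.
transitivity (\sum_(F | acyc F && (nr F == m.+1)) \sum_(c | ~~ rootb F c) Phi F).
  apply: eq_bigr => F /andP[_ /eqP nrF]; rewrite sumr_const -nrF -mulr_natl.
  by rewrite mulr1 mulr_natl.
rewrite (exchange_big_dep predT) //=.
under eq_bigr => c _ do rewrite reindex_c big_mkcond -(pair_bigA _ (fun F p =>
   if acyc F && (nr F == m) && rootb F c && (rt F p != c) then Phi F * wt F p else 0)) /=.
rewrite exchange_big /= mulr_sumr [RHS]big_mkcond /=; apply: eq_bigr => F _.
case/boolP: (acyc F && (nr F == m)) => H; last first.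
  rewrite big1 // => c _; rewrite big1 // => p _.
move/andP: H => [ac /eqP nrF].
rewrite -(inner_sum ac nrF) mulr_suml; apply: eq_bigr => c _.
rewrite mulr_suml; apply: eq_bigr => p _ /=.
by case: ifP => _; rewrite ?mul0r // mulrC.
Qed.

Lemma G0 : G 0 = 1.
Proof.
rewrite /G (big_pred1 [ffun v => v]).
  rewrite /Phi big1 // => v _; rewrite /dg (eq_card (B := pred0)) ?card0 ?/rising ?big_ord0 //.
  by move=> j; rewrite !inE /chld ffunE andbN.
move=> F; rewrite !inE; apply/idP/idP.
  move=> /andP[_ /eqP nr0]; apply/eqP/ffunP => v; rewrite ffunE.
  have := card0_eq nr0 v; rewrite !inE /rootb => /negbFE /eqP //.
move=> /eqP ->; apply/andP; split.
  by apply/forallP => j; apply/existsP; exists ord0; rewrite /rootb /= ffunE.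
rewrite /nr (eq_card (B := pred0)) ?card0 // => v; rewrite !inE /rootb ffunE eqxx.
by [].
Qed.

Lemma G_closed m : (m`!)%:R * G m = \prod_(i < m) ((n - i.+1)%:R * (Ssum + i%:R * t)).
Proof.
elim: m => [|m IH]; first by rewrite G0 big_ord0 mulr1.
rewrite factS natrM mulrAC G_rec big_ord_recr /= -IH.
by ring.
Qed.

End Weights.

Lemma prod_sub k : \prod_(i < k) (k - i) = k`!.
Proof.
elim: k => [|k IH]; first by rewrite big_ord0.
by rewrite big_ord_recl subn0 factS; congr (_ * _); rewrite -IH; apply: eq_bigr => i _.
Qed.

Local Open Scope ring_scope.
Lemma step2_fact (R : comRingType) (x : 'I_n -> R) (t : R) : (0 < n)%N ->
  (n.-1`!)%:R * \sum_(F | acyc F && (#|[pred v | rootb F v]| == 1%N)) Phi x t F =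
  (n.-1`!)%:R * \prod_(k < n.-1) (Ssum x + k%:R * t).
Proof.
move=> n0.
have -> : \sum_(F | acyc F && (#|[pred v | rootb F v]| == 1)) Phi x t F = G x t n.-1.
  apply: eq_bigl => F; congr (_ && _); have := card_roots F.
  by move=> H; apply/eqP/eqP; lia.
rewrite G_closed big_split /= -natr_prod.
congr (_%:R * _); rewrite -prod_sub; apply: eq_bigr => i _; lia.
Qed.

End Forest.

Section PV.
Variable n : nat.
Variable beta : 'I_n -> nat.
Implicit Types (C : {set 'I_n}) (s : {ffun 'I_n -> 'I_n}).

Definition validC C s : bool :=
  [&& [forall j, (j \in C) ==> (s j < #|C|)],
      [forall j, forall k, ((j \in C) && (k \in C) && (s j == s k)) ==> (j == k)] &
      [forall j, (j \notin C) ==> (s j == 0 :> nat)]].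

Definition eldC C s j : bool := [exists k, (k \in C) && (s j < s k) && (beta k < beta j)].
Definition EC C s : nat := #|[pred j | (j \in C) && eldC C s j]|.

Lemma validP C s : reflect
  [/\ forall j, j \in C -> s j < #|C|,
      {in C &, injective s} &
      forall j, j \notin C -> s j = 0 :> nat] (validC C s).
Proof.
apply: (iffP and3P) => [[/forallP H1 /forallP H2 /forallP H3]|[H1 H2 H3]]; split.
- by move=> j jC; have := H1 j; rewrite jC.
- move=> j k jC kC sjk; have /forallP := H2 j; move/(_ k).
  by rewrite jC kC sjk eqxx => /eqP.
- by move=> j jC; have := H3 j; rewrite jC => /eqP.
- by apply/forallP => j; apply/implyP => /H1.
- apply/forallP => j; apply/forallP => k; apply/implyP => /andP[/andP[jC kC] /eqP sjk].
  by apply/eqP; apply: H2.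
- by apply/forallP => j; apply/implyP => /H3 ->.
Qed.

Lemma hit0 (A : {set 'I_n}) (f : 'I_n -> nat) :
  (forall j, j \in A -> f j < #|A|) -> {in A &, injective f} -> 0 < #|A| ->
  exists2 j, j \in A & f j = 0.
Proof.
move=> Hb Hi A0; case/boolP: [exists j in A, f j == 0].
  by move=> /existsP[j /andP[jA /eqP fj]]; exists j.
move=> /negP Hn; exfalso.
have Hu : uniq (0 :: map f (enum A)).
  rewrite /= map_inj_in_uniq ?enum_uniq ?andbT.
    apply/negP => /mapP[j]; rewrite mem_enum => jA fj.
    by apply: Hn; apply/existsP; exists j; rewrite jA -fj eqxx.
  by move=> j k; rewrite !mem_enum; apply: Hi.
have Hs : {subset (0 :: map f (enum A)) <= iota 0 #|A|}.
  move=> z; rewrite inE mem_iota add0n => /orP[/eqP -> //|/mapP[j]].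
  by rewrite mem_enum => /Hb jA ->.
have := uniq_leq_size Hu Hs.
by rewrite /= size_map size_iota -cardE ltnn.
Qed.

Section Weight.
Variables (R : comRingType) (y t : R).
Local Open Scope ring_scope.

Definition W C s := t ^+ EC C s * y ^+ (#|C| - EC C s).

Lemma EC_le C s : (EC C s <= #|C|)%N.
Proof. by apply: subset_leq_card; apply/subsetP => j; rewrite !inE => /andP[]. Qed.

Lemma sum_f C : {in C &, injective beta} -> (0 < #|C|)%N ->
  \sum_(j0 in C) (if [exists k, (k \in C) && (beta k < beta j0)%N] then t else y)
  = y + (#|C|.-1)%:R * t.
Proof.
move=> inj C0; have [c0 c0C] : {c0 | c0 \in C}.
  by case: (pickP (mem C)) => [c0 Hc|H0]; [exists c0|move: C0; rewrite (eq_card0 H0)].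
case: (arg_minnP beta c0C) => m mC mmin.
rewrite (bigD1 m) //=.
have -> : [exists k, (k \in C) && (beta k < beta m)%N] = false.
  apply/negbTE/negP => /existsP[k /andP[kC]]; rewrite ltnNge.
  by rewrite mmin.
congr (_ + _); rewrite (eq_bigr (fun _ => t)); last first.
  move=> j /andP[jC jm]; case: ifP => // /negbT /negP; case; apply/existsP.
  exists m; apply/andP; split; first exact: mC.
  rewrite ltn_neqAle mmin // andbT.
  by apply/negP => /eqP /inj H; move: jm; rewrite H ?eqxx.
rewrite sumr_const mulr_natl; congr (_ *+ _).
have mC' : m \in C := mC.
rewrite (cardD1 m C) mC' /=.
by apply: eq_card => j; rewrite !inE andbC.
Qed.

Lemma val_insubd0 (j : 'I_n) k : (k < n)%N -> val (insubd j k) = k.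
Proof. by move=> kn; rewrite val_insubd kn. Qed.

Lemma PV d : forall C, #|C| = d -> {in C &, injective beta} ->
  \sum_(s | validC C s) W C s = \prod_(i < d) (y + i%:R * t).
Proof.
elim: d => [|d IH] C Cd inj.
  rewrite big_ord0; have C0 : C = set0 by apply: cards0_eq.
  pose s0 : {ffun 'I_n -> 'I_n} := [ffun j => insubd j 0].
  rewrite (big_pred1 s0).
    rewrite /W /EC Cd (eq_card0 (A := [pred j | (j \in C) && eldC C s0 j])) ?expr0 ?mulr1 //.
    by move=> j; rewrite !inE C0 inE.
  move=> s; rewrite !inE; apply/idP/idP.
    case/validP => _ _ H3; apply/eqP/ffunP => j; apply/val_inj.
    rewrite ffunE val_insubd0; last by apply: leq_ltn_trans (ltn_ord j).
    by apply: H3; rewrite C0 inE.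
  move=> /eqP ->; apply/validP; split.
  - by move=> j; rewrite C0 inE.
  - by move=> j k; rewrite C0 inE.
  - by move=> j _; rewrite ffunE val_insubd0 //; apply: leq_ltn_trans (ltn_ord j).
have Cn : (d.+1 <= n)%N by rewrite -Cd -[X in (_ <= X)%N](card_ord n) max_card.
have [c0 c0C] : exists c0, c0 \in C by apply/card_gt0P; rewrite Cd.
have n0 : (0 < n)%N by apply: leq_ltn_trans (ltn_ord c0).
have CD1 : forall j0, j0 \in C -> #|C :\ j0| = d.
  by move=> j0 j0C; move: Cd; rewrite (cardsD1 j0) j0C add1n => -[].
pose h := fun q : 'I_n * {ffun 'I_n -> 'I_n} => [ffun j : 'I_n =>
  insubd j (if j == q.1 then 0 else if j \in C :\ q.1 then (q.2 j).+1 else 0)%N].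
pose h' := fun s : {ffun 'I_n -> 'I_n} =>
  let j0 := odflt c0 [pick j in C | val (s j) == 0%N] in
  (j0, [ffun j : 'I_n => insubd j (if j \in C :\ j0 then (s j).-1 else 0)%N]).
pose Q := fun q : 'I_n * {ffun 'I_n -> 'I_n} => (q.1 \in C) && validC (C :\ q.1) q.2.
have hE : forall q j, Q q -> val (h q j) =
    (if j == q.1 then 0 else if j \in C :\ q.1 then (q.2 j).+1 else 0)%N.
  move=> [j0 s'] j /andP[/= j0C /validP[V1 _ _]]; rewrite ffunE val_insubd0 //.
  case: ifP => // _; case: ifP => // jC.
  by rewrite /=; have := V1 j jC; rewrite (CD1 j0 j0C); lia.
have h'E : forall s j, val ((h' s).2 j) = if j \in C :\ (h' s).1 then (s j).-1 else 0%N.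
  move=> s j; rewrite /= ffunE val_insubd0 //; case: ifP => // _.
  by apply: leq_ltn_trans (leq_pred _) (ltn_ord _).
have F1 : forall q, Q q -> h' (h q) = q.
  move=> [j0 s'] Qq; have /andP[/= j0C /validP[V1 V2 V3]] := Qq.
  have P1 : (h' (h (j0, s'))).1 = j0.
    rewrite /h' /=; case: pickP => [j1 /andP[j1C /eqP]|H0] /=.
      rewrite (hE _ _ Qq) /=; case: (j1 =P j0) => // /eqP j1j0.
      by rewrite !inE j1j0 j1C.
    by have := H0 j0; rewrite j0C (hE _ _ Qq) /= eqxx.
  have P2 : (h' (h (j0, s'))).2 = s'.
    apply/ffunP => j; apply/val_inj; rewrite h'E P1 (hE _ _ Qq) /=.
    case: ifP => jC; last by rewrite V3 // jC.
    have jj0 : (j == j0) = false by move: jC; rewrite !inE => /andP[/negPf].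
    by rewrite jj0 jC.
  by rewrite [LHS]surjective_pairing P1 P2.
have F2 : forall q, Q q -> validC C (h q).
  move=> [j0 s'] Qq; have /andP[/= j0C /validP[V1 V2 V3]] := Qq.
  apply/validP; split.
  - move=> j jC; rewrite (hE _ _ Qq) /= Cd; case: ifP => // _; case: ifP => // jC'.
    by rewrite ltnS -(CD1 j0 j0C) V1.
  - move=> j k jC kC /(congr1 val); rewrite !(hE _ _ Qq) /=.
    case: (j =P j0) => [->|/eqP jj0]; case: (k =P j0) => [->|/eqP kj0] //.
    + by rewrite !inE kj0 kC.
    + by rewrite !inE jj0 jC.
    rewrite !inE jj0 kj0 jC kC /= => -[] /val_inj; apply: V2; rewrite !inE ?jj0 ?kj0 //.
  - move=> j jC; rewrite (hE _ _ Qq) /=; case: (j =P j0) => [jj|_]; first by move: jC; rewrite jj j0C.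
    by rewrite inE (negPf jC) andbF.
have F3 : forall s, validC C s -> Q (h' s).
  move=> s /validP[V1 V2 V3].
  have [j1 j1C sj1] : exists2 j, j \in C & val (s j) = 0%N.
    apply: hit0 => //; last by rewrite Cd.
    by move=> j k jC kC /val_inj; apply: V2.
  have [j0C sj0] : ((h' s).1 \in C) /\ val (s (h' s).1) = 0%N.
    rewrite /h' /=; case: pickP => [j2 /andP[j2C /eqP]|H0] //=.
    by have := H0 j1; rewrite j1C sj1 eqxx.
  apply/andP; split => //; apply/validP; split.
  - move=> j jC; rewrite h'E jC (CD1 _ j0C).
    move: jC; rewrite !inE => /andP[jj0 jC].
    have sj : val (s j) != 0%N.
      by apply: contra jj0 => /eqP sj; apply/eqP/V2 => //; apply/val_inj; rewrite sj sj0.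
    by rewrite -ltnS prednK ?lt0n // -Cd V1.
  - move=> j k jC kC /(congr1 val); rewrite !h'E jC kC.
    move: jC kC; rewrite !inE => /andP[jj0 jC] /andP[kk0 kC].
    have nz : forall u, u \in C -> u != (h' s).1 -> val (s u) != 0%N.
      move=> u uC uu; apply: contra uu => /eqP su; apply/eqP/V2 => //.
      by apply/val_inj; rewrite su sj0.
    move=> E; apply: V2 => //; apply/val_inj.
    by rewrite -[val (s j)]prednK ?lt0n ?nz // E prednK ?lt0n ?nz.
  - by move=> j jC; rewrite h'E (negPf jC).
have F4 : forall s, validC C s -> h (h' s) = s.
  move=> s Vs; have Qs := F3 _ Vs; move: (Vs) => /validP[V1 V2 V3].
  have /andP[j0C _] := Qs.
  have sj0 : val (s (h' s).1) = 0%N.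
    have [j1 j1C sj1] : exists2 j, j \in C & val (s j) = 0%N.
      apply: hit0 => //; last by rewrite Cd.
      by move=> j k jC kC /val_inj; apply: V2.
    rewrite /h' /=; case: pickP => [j2 /andP[j2C /eqP]|H0] //=.
    by have := H0 j1; rewrite j1C sj1 eqxx.
  apply/ffunP => j; apply/val_inj; rewrite (hE _ _ Qs).
  case: (j =P (h' s).1) => [->|/eqP jj0] //.
  rewrite (_ : \val (s j) = s j) //; case: ifP => jC; last by rewrite V3 //; apply: contraFN jC; rewrite !inE jj0.
  rewrite h'E jC prednK // lt0n; move: jC; rewrite !inE => /andP[_ jC].
  apply: contra jj0 => /eqP sj; apply/eqP/V2 => //; apply/val_inj => /=; rewrite sj sj0.
  by [].
have hN : forall q j, Q q -> nat_of_ord (h q j) =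
    (if j == q.1 then 0 else if j \in C :\ q.1 then (q.2 j).+1 else 0)%N := hE.
pose f := fun j0 => if [exists k, (k \in C) && (beta k < beta j0)%N] then t else y.
have F5 : forall q, Q q -> W C (h q) = f q.1 * W (C :\ q.1) q.2.
  move=> [j0 s'] Qq; have /andP[/= j0C V] := Qq.
  have E0 : eldC C (h (j0,s')) j0 = [exists k, (k \in C) && (beta k < beta j0)%N].
    apply/existsP/existsP => [[k /andP[/andP[kC _] bk]]|[k /andP[kC bk]]]; exists k.
      by rewrite kC bk.
    rewrite kC bk andbT !hN //= eqxx; case: (k =P j0) => [kj|/eqP kj].
      by move: bk; rewrite kj ltnn.
    by rewrite !inE kj kC.
  have E1 : forall j, j \in C :\ j0 -> eldC C (h (j0,s')) j = eldC (C :\ j0) s' j.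
    move=> j jC; have jj0 : j != j0 by move: jC; rewrite !inE => /andP[].
    apply/existsP/existsP => [[k /andP[/andP[kC hk] bk]]|[k /andP[/andP[kC sk] bk]]]; exists k.
      move: hk; rewrite !hN //= (negPf jj0) jC; case: (k =P j0) => // /eqP kj0.
      by rewrite !inE kj0 kC /= ltnS => ->; rewrite bk.
    have [kj0 kC'] : k != j0 /\ k \in C by move: kC; rewrite !inE => /andP[].
    by rewrite kC' bk andbT !hN //= (negPf jj0) jC (negPf kj0) kC ltnS.
  have EE : EC C (h (j0, s')) = ([exists k, (k \in C) && (beta k < beta j0)%N] : nat)
                                + EC (C :\ j0) s'.
    rewrite /EC (cardD1 j0) inE j0C E0 /=; congr (_ + _); apply: eq_card => j.
    rewrite !inE; case/boolP: (j \in C :\ j0) => jC.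
      by rewrite E1 //; move: jC; rewrite !inE => /andP[-> ->].
    by move: jC; rewrite !inE negb_and negbK => /orP[/eqP ->|/negPf ->]; rewrite ?eqxx ?andbF.
  have le := EC_le (C :\ j0) s'; rewrite (CD1 j0 j0C) in le.
  rewrite /W EE Cd (CD1 j0 j0C) /f /=.
  case: ifP => _; rewrite ?add1n ?add0n.
    by rewrite subSS exprS mulrA.
  by rewrite subSn // exprS mulrCA.
rewrite (reindex_onto h h' F4).
rewrite (eq_bigl Q) => [|q]; last first.
  apply/idP/idP => [/andP[V /eqP E]|Qq]; first by rewrite -E; exact: F3.
  by rewrite F2 // F1 // eqxx.
rewrite (eq_bigr (fun q => f q.1 * W (C :\ q.1) q.2)) => [|q Qq]; last exact: F5.
rewrite -(pair_big_dep (fun j => j \in C) (fun j0 s' => validC (C :\ j0) s')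
                       (fun j0 s' => f j0 * W (C :\ j0) s')) /=.
have injD : forall j0, {in C :\ j0 &, injective beta}.
  by move=> j0 a b; rewrite !inE => /andP[_ aC] /andP[_ bC]; apply: inj.
under eq_bigr => j0 j0C do rewrite -mulr_sumr (IH (C :\ j0) (CD1 j0 j0C) (injD j0)).
rewrite -mulr_suml /f sum_f // ?Cd /= ?big_ord_recr /= 1?mulrC //.
Qed.



End Weight.
End PV.

Section Step1.
Variable n : nat.
Implicit Types (F pos : {ffun 'I_n -> 'I_n}).

Definition bt F i : nat := \big[minn/n]_(j | [exists k : 'I_n.+1, iter k F j == i]) val j.

Lemma beta_bt F pos i : beta (F, pos) i = bt F i.
Proof. by []. Qed.

Lemma bigmin_le (r : seq 'I_n) (P : pred 'I_n) (x0 : nat) i :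
  i \in r -> P i -> \big[minn/x0]_(j <- r | P j) val j <= val i.
Proof.
elim: r => // a r IH; rewrite inE big_cons => /orP[/eqP <-|ir] Pi.
  by rewrite Pi geq_minl.
case: ifP => _; last exact: IH.
by rewrite geq_min IH ?orbT.
Qed.

Lemma bigmin_att (P : pred 'I_n) (i0 : 'I_n) : P i0 ->
  exists2 m, P m & \big[minn/n]_(j | P j) val j = val m.
Proof.
move=> Pi0; case: (arg_minnP (fun j : 'I_n => val j) Pi0) => m Pm mmin.
exists m => //; apply/eqP; rewrite eqn_leq; apply/andP; split.
  by apply: bigmin_le => //; rewrite mem_index_enum.
apply: (big_ind (fun v => val m <= v)).
- exact: ltnW (ltn_ord m).
- by move=> a b ha hb; rewrite leq_min ha hb.
- by move=> j Pj; apply: mmin.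
Qed.

Lemma bt_att F i : exists2 b, [exists k : 'I_n.+1, iter k F b == i] & bt F i = val b.
Proof. by apply: (bigmin_att (i0 := i)); apply/existsP; exists ord0; rewrite /= eqxx. Qed.

Definition Cv F v := [set j | chld F v j].

Lemma sib_eq F v j k a a' b : acyc F -> chld F v j -> chld F v k ->
  iter a F b = j -> iter a' F b = k -> j = k.
Proof.
move=> ac; wlog aa : j k a a' / a <= a'.
  move=> W cj ck ej ek; case: (leqP a a') => h; first exact: (W j k a a').
  by apply/esym; apply: (W k j a' a) => //; apply: ltnW.
move=> /andP[/eqP Fj jv] /andP[/eqP Fk kv] ej ek.
case: (ltnP a a') => [lt|ge]; last first.
  have ea : a' = a by apply/eqP; rewrite eqn_leq aa ge.
  by rewrite -ej -ek ea.
have E : iter (a' - a).-1 F v = k.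
  rewrite -ek -Fj -ej -iterSr -iterD prednK ?subnK ?subn_gt0 //; exact: ltnW.
have cyc : iter (a' - a).-1.+1 F v = v by rewrite iterS E Fk.
have rv := cycle_root ac (ltn0Sn _) cyc.
by move: kv; rewrite -E iter_root // eqxx.
Qed.

Lemma sib_inj F v : acyc F -> {in Cv F v &, injective (bt F)}.
Proof.
move=> ac j k; rewrite !inE => cj ck.
have [b1 /existsP[a1 /eqP e1] h1] := bt_att F j.
have [b2 /existsP[a2 /eqP e2] h2] := bt_att F k.
rewrite h1 h2 => /val_inj eb; subst b2.
exact: (sib_eq ac cj ck e1 e2).
Qed.

Definition posvalid F pos : bool :=
  [&& [forall v, rootb F v ==> (pos v == 0 :> nat)],
      [forall i, forall j, chld F i j ==> (pos j < dg F i)] &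
      [forall i, forall j, forall k,
         [&& chld F i j, chld F i k & pos j == pos k] ==> (j == k)]].

Lemma ipt F pos : is_plane_tree (F, pos) =
  (acyc F && (#|[pred v | rootb F v]| == 1)) && posvalid F pos.
Proof.
rewrite /is_plane_tree /posvalid /=.
rewrite /is_rootv /child /deg /acyc /rootb /dg /chld /=.
rewrite /child /=.
by case: [forall j, exists k : 'I_n.+1, _]; case: (#|_| == 1).
Qed.

Lemma card_Cv F v : #|Cv F v| = dg F v.
Proof. by rewrite /Cv cardsE. Qed.

Lemma elder_child F pos j : elder (F, pos) j -> chld F (F j) j.
Proof. by move=> /existsP[k /and4P[]]. Qed.

Lemma eld_sum F pos : eld (F, pos) = \sum_v eldv (F, pos) v.
Proof.
rewrite /eld /eldv; under eq_bigr do rewrite -sum1_card big_mkcond /=.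
rewrite exchange_big /= -[LHS]sum1_card [LHS]big_mkcond /=; apply: eq_bigr => j _.
rewrite (bigD1 (F j)) //= big1 => [|v vF]; last first.
  by rewrite inE /child /= eq_sym (negPf vF).
rewrite addn0 !inE; case E: (elder (F, pos) j) => //.
  by rewrite andbT (_ : child (F, pos) (F j) j = chld F (F j) j) // (elder_child E).
by rewrite andbF.
Qed.

Lemma eldv_EC F pos v : eldv (F, pos) v = EC (bt F) (Cv F v) pos.
Proof.
rewrite /eldv /EC; apply: eq_card => j; rewrite !inE /Cv ?inE.
rewrite (_ : child (F, pos) v j = chld F v j) //.
case/boolP: (chld F v j) => cj //=.
have Fj : F j = v by case/andP: cj => /eqP.
rewrite /elder /eldC /=; apply/existsP/existsP => [[k /and4P[_ ck pk bk]]|[k]].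
  by exists k; rewrite inE -Fj (_ : chld F (F j) k = child (F, pos) (F j) k) // ck pk.
rewrite inE => /andP[/andP[ck pk] bk]; exists k.
rewrite Fj (_ : child (F, pos) v j = chld F v j) // (_ : child (F, pos) v k = chld F v k) //.
by rewrite cj ck pk.
Qed.

Lemma posvalidP F pos : reflect
  [/\ forall v, rootb F v -> val (pos v) = 0,
      forall i j, chld F i j -> pos j < dg F i &
      forall i j k, chld F i j -> chld F i k -> pos j = pos k -> j = k]
  (posvalid F pos).
Proof.
apply: (iffP and3P) => [[/forallP H1 /forallP H2 /forallP H3]|[H1 H2 H3]]; split.
- by move=> v rv; have := H1 v; rewrite rv => /eqP.
- by move=> i j cj; have /forallP := H2 i; move/(_ j); rewrite cj.
- move=> i j k cj ck pjk; have /forallP := H3 i; move/(_ j) => /forallP /(_ k).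
  by rewrite cj ck pjk eqxx => /eqP.
- by apply/forallP => v; apply/implyP => /H1 ->.
- by apply/forallP => i; apply/forallP => j; apply/implyP => /H2.
- apply/forallP => i; apply/forallP => j; apply/forallP => k.
  by apply/implyP => /and3P[cj ck /eqP pjk]; apply/eqP; apply: (H3 i).
Qed.

Lemma insubd0 (j : 'I_n) : val (insubd j 0) = 0.
Proof. by rewrite val_insubd (leq_ltn_trans (leq0n _) (ltn_ord j)). Qed.

Lemma cvE F v j : (j \in Cv F v) = chld F v j.
Proof. by rewrite inE. Qed.

Section Fam.
Variables (R : comRingType).
Local Open Scope ring_scope.

Lemma fam F (G : 'I_n -> {ffun 'I_n -> 'I_n} -> R) :
  (forall v (s1 s2 : {ffun 'I_n -> 'I_n}), (forall j, j \in Cv F v -> s1 j = s2 j) -> G v s1 = G v s2) ->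
  \sum_(pos | posvalid F pos) \prod_v G v pos =
  \prod_v \sum_(s | validC (Cv F v) s) G v s.
Proof.
move=> HG; rewrite bigA_distr_big_dep /=.
pose ff := fun pos : {ffun 'I_n -> 'I_n} => [ffun v : 'I_n =>
  [ffun j : 'I_n => if j \in Cv F v then pos j else insubd j 0%N]].
pose pf := fun f : {ffun 'I_n -> {ffun 'I_n -> 'I_n}} => [ffun j => f (F j) j].
have ffE : forall pos v j, ff pos v j = if j \in Cv F v then pos j else insubd j 0%N.
  by move=> pos v j; rewrite !ffunE.
have pfE : forall f j, pf f j = f (F j) j by move=> f j; rewrite ffunE.
have cFj : forall j, (j \in Cv F (F j)) = ~~ rootb F j.
  by move=> j; rewrite cvE /chld eqxx /rootb eq_sym.
symmetry; rewrite (reindex_onto ff pf) /=; last first.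
  move=> f /familyP Hf; apply/ffunP => v; apply/ffunP => j.
  have /validP[_ _ V3] := Hf v.
  rewrite ffE pfE; case: ifP => jC.
    by rewrite cvE in jC; case/andP: jC => /eqP ->.
  by apply/val_inj => /=; rewrite insubd0 V3 // jC.
apply: eq_big => pos.
  apply/idP/idP.
    move=> /andP[/familyP Hf /eqP Hp]; apply/posvalidP; split.
    - move=> v rv; rewrite -Hp pfE ffE cFj rv /=; exact: insubd0.
    - move=> i j cj; have /validP[V1 _ _] := Hf i.
      by have := V1 j; rewrite cvE cj ffE cvE cj card_Cv => /(_ isT).
    - move=> i j k cj ck pjk; have /validP[_ V2 _] := Hf i.
      by apply: V2; rewrite ?cvE // !ffE !cvE cj ck.
  move=> /posvalidP[H1 H2 H3]; apply/andP; split.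
    apply/familyP => v; apply/validP; split.
    - by move=> j jC; rewrite ffE jC card_Cv; apply: H2; rewrite -cvE.
    - move=> j k jC kC; rewrite !ffE jC kC; apply: (H3 v); by rewrite -cvE.
    - by move=> j jC; rewrite ffE (negPf jC) insubd0.
  apply/eqP/ffunP => j; rewrite pfE ffE cFj; case: ifP => // /negbFE rj.
  by apply/val_inj; rewrite insubd0 H1.
move=> _; apply: eq_bigr => v _; apply: HG => j jC.
by rewrite ffE jC.
Qed.

End Fam.

Section W1.
Variables (R : comRingType) (x : 'I_n -> R) (t : R).
Local Open Scope ring_scope.

Lemma weight F pos : t ^+ eld (F, pos) * \prod_i x i ^+ young (F, pos) i =
  \prod_v W (bt F) (x v) t (Cv F v) pos.
Proof.
rewrite eld_sum -prodrXr -big_split; apply: eq_bigr => v _.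
by rewrite /W /young eldv_EC card_Cv.
Qed.

Lemma W_restr F v (s1 s2 : {ffun 'I_n -> 'I_n}) :
  (forall j, j \in Cv F v -> s1 j = s2 j) ->
  W (bt F) (x v) t (Cv F v) s1 = W (bt F) (x v) t (Cv F v) s2.
Proof.
move=> H.
have E : EC (bt F) (Cv F v) s1 = EC (bt F) (Cv F v) s2.
  apply: eq_card => j; rewrite !inE.
  case jC: (chld F v j) => //=; rewrite /eldC -cvE in jC.
  apply/existsP/existsP => -[k Hk]; exists k; move: Hk;
    (case/boolP: (k \in Cv F v) => kC //=); rewrite !H //.
by rewrite /W E.
Qed.

Lemma step1 F : acyc F ->
  \sum_(pos | posvalid F pos) t ^+ eld (F, pos) * \prod_i x i ^+ young (F, pos) i
  = Phi x t F.
Proof.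
move=> ac; under eq_bigr do rewrite weight.
rewrite fam; last by move=> v s1 s2; apply: W_restr.
apply: eq_bigr => v _.
by rewrite (PV (x v) t (card_Cv F v) (sib_inj ac (v := v))).
Qed.

End W1.

End Step1.

Local Open Scope ring_scope.


Lemma step2 (n : nat) (R : comRingType) (x : 'I_n -> R) (t : R) : (0 < n)%N ->
  \sum_(F | acyc F && (#|[pred v | rootb F v]| == 1%N)) Phi x t F =
  \prod_(k < n.-1) (Ssum x + k%:R * t).
Proof.
move=> n0.
pose U := {mpoly int[n.+1]}.
pose xU := fun i : 'I_n => ('X_(lift ord_max i) : U).
pose tU := ('X_(@ord_max n) : U).
have HU := step2_fact xU tU n0.
have cU : ((n.-1)`!%:R : U) != 0.
  by rewrite -mpolyC_nat mpolyC_eq0 Num.Theory.pnatr_eq0 -lt0n fact_gt0.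
have {HU} HU := mulfI cU HU.
pose h := fun i : 'I_n.+1 => if unlift ord_max i is Some j then x j else t.
pose phi := mmap (intr : int -> R) h.
have phiX : forall k, phi 'X_k = h k.
  by move=> k; rewrite /phi mmapX mmap1U.
have phiP : forall F, phi (Phi xU tU F) = Phi x t F.
  move=> F; rewrite /phi /Phi rmorph_prod; apply: eq_bigr => v _.
  rewrite /rising rmorph_prod; apply: eq_bigr => i _.
  rewrite rmorphD rmorphM rmorph_nat /= !mmapX !mmap1U /h liftK unlift_none.
  by [].
have := congr1 phi HU.
rewrite /phi !rmorph_sum !rmorph_prod /= -/phi.
under eq_bigr do rewrite phiP.
move=> ->; apply: eq_bigr => k _.
rewrite /phi rmorphD rmorphM rmorph_nat /= mmapX mmap1U /h unlift_none /Ssum.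
rewrite rmorph_sum; congr (_ + _); apply: eq_bigr => i _.
by rewrite /= mmapX mmap1U liftK.
Qed.

Theorem theorem4p3 (n : nat) (hn : (1 <= n)%N) (R : comRingType)
    (x : 'I_n -> R) (t : R) :
  \sum_(T : ptree n | is_plane_tree T)
      t ^+ eld T * \prod_(i < n) x i ^+ young T i
  = \prod_(k < n.-1) (\sum_(i < n) x i + k%:R * t).
Proof.
rewrite (eq_bigl (fun T : ptree n => (acyc T.1 && (#|[pred v | rootb T.1 v]| == 1%N))
                                     && posvalid T.1 T.2)); last first.
  by move=> [F pos]; rewrite ipt.
rewrite (eq_bigr (fun T : ptree n => t ^+ eld (T.1, T.2) * \prod_(i < n) x i ^+ young (T.1, T.2) i));
  last by move=> [F pos].
rewrite -(pair_big_dep (fun F => acyc F && (#|[pred v | rootb F v]| == 1%N))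
   (fun F pos => posvalid F pos)
   (fun F pos => t ^+ eld (F, pos) * \prod_(i < n) x i ^+ young (F, pos) i)) /=.
under eq_bigr => F /andP[ac _] do rewrite step1 //.
exact: step2.
Qed.
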